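(* Assume $\ell=d$ and that $B_1,B_2,R_1,R_2$ (and $B_1+\bar B_1,B_2+\bar B_2,R_1+\bar R_1,R_2+\bar R_2$) are invertible. Let $P^c\in\mathcal S^d$ be a solution to $0=\mathcal M(P^c)-\mathcal L(P^c)\mathcal N(P^c)^{-1}\mathcal L(P^c)^\top$. If $P^c$ and $(P^c)^{-1}+\gamma B_1R_1^{-1}B_1^\top-\gamma B_2R_2^{-1}B_2^\top$ are invertible, then $$\mathcal M(P^c)-\mathcal L(P^c)\mathcal N(P^c)^{-1}\mathcal L(P^c)^\top=Q-P^c+A^\top\Big(\frac1\gamma(P^c)^{-1}+B_1R_1^{-1}B_1^\top-B_2R_2^{-1}B_2^\top\Big)^{-1}A.$$
   Context: $\mathcal S^d$: symmetric $d\times d$ matrices. Fix $d\ge1$, $\gamma\in(0,1)$, $A,\bar A\in\mathbb R^{d\times d}$, $B_1,\bar B_1,B_2,\bar B_2\in\mathbb R^{d\times d}$, $Q\in\mathcal S^d$, symmetric $R_1,\bar R_1,R_2,\bar R_2\in\mathbb R^{d\times d}$. For $P\in\mathcal S^d$: $\mathcal M(P)=\gamma A^\top PA-P+Q$, $\mathcal L_i(P)=\gamma A^\top PB_i$, $\mathcal L_{12}(P)=\gamma B_1^\top PB_2$, $\mathcal N_1(P)=\gamma B_1^\top PB_1+R_1$, $\mathcal N_2(P)=\gamma B_2^\top PB_2-R_2$, $\mathcal L(P)=[\mathcal L_1(P),\mathcal L_2(P)]$, $\mathcal N(P)=\begin{bmatrix}\mathcal N_1(P)&\mathcal L_{12}(P)\\\mathcal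 L_{12}(P)^\top&\mathcal N_2(P)\end{bmatrix}$ (a solution of the equation is required to have $\mathcal N(P^c)$ invertible). *)

(* Defs.v *)
From HB Require Import structures.
From mathcomp Require Import all_boot all_order all_algebra.
Set Implicit Arguments. Unset Strict Implicit. Unset Printing Implicit Defensive.
Import Order.TTheory GRing.Theory Num.Theory.
Local Open Scope ring_scope.

Section Ops.
Variables (R : realFieldType) (d : nat) (gamma : R).
Variables (A B1 B2 Q R1 R2 : 'M[R]_d).

Definition Mop (P : 'M[R]_d) : 'M[R]_d := gamma *: (A^T *m P *m A) - P + Q.
Definition L1op (P : 'M[R]_d) : 'M[R]_d := gamma *: (A^T *m P *m B1).
Definition L2op (P : 'M[R]_d) : 'M[R]_d := gamma *: (A^T *m P *m B2).
Definition L12op (P : 'M[R]_d) : 'M[R]_d := gamma *: (B1^T *m P *m B2).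
Definition N1op (P : 'M[R]_d) : 'M[R]_d := gamma *: (B1^T *m P *m B1) + R1.
Definition N2op (P : 'M[R]_d) : 'M[R]_d := gamma *: (B2^T *m P *m B2) - R2.
Definition Lop (P : 'M[R]_d) : 'M[R]_(d, d + d) := row_mx (L1op P) (L2op P).
Definition Nop (P : 'M[R]_d) : 'M[R]_(d + d) :=
  block_mx (N1op P) (L12op P) (L12op P)^T (N2op P).
Definition Ric (P : 'M[R]_d) : 'M[R]_d :=
  Mop P - Lop P *m invmx (Nop P) *m (Lop P)^T.
End Ops.

(* Main.v *)
Require Import Defs.
From HB Require Import structures.
From mathcomp Require Import all_boot all_order all_algebra.
Import Order.TTheory GRing.Theory Num.Theory.
Local Open Scope ring_scope.

Lemma zmod4 (V : zmodType) (a p q b : V) : a - p + q - b = q - p + (a - b).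
Proof. by rewrite -!addrA addrCA [RHS]addrCA; congr (_ + _); rewrite addrCA. Qed.

Theorem mainTheorem14 (R : realFieldType) (d : nat) (gamma : R)
  (A Abar B1 B1bar B2 B2bar Q R1 R1bar R2 R2bar Pc : 'M[R]_d) :
  (0 < d)%N -> 0 < gamma < 1 ->
  Q^T = Q -> R1^T = R1 -> R1bar^T = R1bar -> R2^T = R2 -> R2bar^T = R2bar ->
  B1 \in unitmx -> B2 \in unitmx -> R1 \in unitmx -> R2 \in unitmx ->
  B1 + B1bar \in unitmx -> B2 + B2bar \in unitmx ->
  R1 + R1bar \in unitmx -> R2 + R2bar \in unitmx ->
  Pc^T = Pc ->
  Nop gamma B1 B2 R1 R2 Pc \in unitmx ->
  Ric gamma A B1 B2 Q R1 R2 Pc = 0 ->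
  Pc \in unitmx ->
  invmx Pc + gamma *: (B1 *m invmx R1 *m B1^T) - gamma *: (B2 *m invmx R2 *m B2^T)
    \in unitmx ->
  Ric gamma A B1 B2 Q R1 R2 Pc =
    Q - Pc + A^T *m invmx (gamma^-1 *: invmx Pc + B1 *m invmx R1 *m B1^T
                           - B2 *m invmx R2 *m B2^T) *m A.
Proof.
move=> _ /andP[g0 _] _ _ _ _ _ _ _ uR1 uR2 _ _ _ _ PT uN _ uP uX.
have gn0 : gamma != 0 by rewrite gt_eqF.
set g := gamma; set P := Pc.
set B : 'M[R]_(d, d + d) := row_mx B1 B2.
set Rd : 'M[R]_(d + d) := block_mx R1 0 0 (- R2).
set Rdi : 'M[R]_(d + d) := block_mx (invmx R1) 0 0 (- invmx R2).
have hRd : Rdi *m Rd = 1%:M.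
  by rewrite /Rdi /Rd mulmx_block !mulmx0 !mul0mx !addr0 !add0r mulmxN mulNmx opprK
    !mulVmx // -scalar_mx_block.
have hN : Nop g B1 B2 R1 R2 P = g *: (B^T *m P *m B) + Rd.
  rewrite /Nop /B /Rd tr_row_mx mul_col_mx mul_col_row scale_block_mx add_block_mx.
  rewrite /N1op /N2op /L12op ?addr0 ?add0r; congr block_mx. all: try by [].
  by rewrite linearZ /= !trmx_mul trmxK PT mulmxA.
have hL : Lop g A B1 B2 P = g *: (A^T *m P *m B).
  by rewrite /Lop /B mul_mx_row scale_row_mx.
have hS : B *m Rdi *m B^T = B1 *m invmx R1 *m B1^T - B2 *m invmx R2 *m B2^T.
  rewrite /B /Rdi mul_row_block tr_row_mx mul_row_col !mulmx0 !addr0 !add0r.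
  by rewrite mulmxN mulNmx.
set N := Nop g B1 B2 R1 R2 P.
set S := B1 *m invmx R1 *m B1^T - B2 *m invmx R2 *m B2^T.
set X := g^-1 *: invmx P + B1 *m invmx R1 *m B1^T - B2 *m invmx R2 *m B2^T.
have uX' : X \in unitmx.
  have -> : X = g^-1 *: (invmx P + g *: (B1 *m invmx R1 *m B1^T) - g *: (B2 *m invmx R2 *m B2^T)).
    by rewrite /X scalerBr scalerDr !scalerA mulVf // !scale1r.
  by rewrite unitmxZ // unitfE invr_eq0.
set K := P *m B *m invmx N *m B^T *m P.
set Y := g *: P - (g * g) *: K.
have hRic : Ric g A B1 B2 Q R1 R2 P = Q - P + A^T *m Y *m A.
  have e1 : Lop g A B1 B2 P *m invmx N *m (Lop g A B1 B2 P)^T = A^T *m ((g*g) *: K) *m A.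
    rewrite hL linearZ /= !trmx_mul trmxK PT /K.
    rewrite -!scalemxAl -!scalemxAr -!scalemxAl scalerA !mulmxA.
    done.
  rewrite /Ric e1 /Mop /Y mulmxBr mulmxBl -?scalemxAl -?scalemxAr !mulmxA -!scalemxAl.
  by rewrite zmod4.
have hXY : X *m Y = 1%:M.
  have hX : X = g^-1 *: invmx P + B *m Rdi *m B^T by rewrite hS /X addrA.
  have hXP : X *m P = g^-1 *: 1%:M + B *m Rdi *m B^T *m P.
    by rewrite hX mulmxDl -scalemxAl mulVmx.
  have hXPB : X *m P *m B = g^-1 *: (B *m Rdi *m N).
    rewrite /N hN mulmxDr hXP mulmxDl -scalemxAl mul1mx -(mulmxA B Rdi Rd) hRd mulmx1.
    rewrite -!scalemxAr scalerDr scalerA mulVf // scale1r addrC !mulmxA.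
    done.
  have hXK : X *m K = g^-1 *: (B *m Rdi *m B^T *m P).
    rewrite /K !mulmxA hXPB -!scalemxAl -(mulmxA _ N) mulmxV // mulmx1.
    done.
  rewrite /Y mulmxBr -!scalemxAr hXK hXP scalerDr scalerA mulfV // scale1r scalerA.
  rewrite -mulrA mulfV // mulr1 addrK.
  done.
rewrite hRic; congr (_ + _ *m _ *m _).
by rewrite -{1}(mulKmx uX' Y) hXY mulmx1.
Qed.
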